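(* Let $P,Q,R\in\mathbb P_d$. Then $$\operatorname{B}_R(P,Q)=\big\|\operatorname{Log}_R[P]-\operatorname{Log}_R[Q]\big\|_R^2,$$ where $\operatorname{Log}_R$ is the Bures–Wasserstein Riemannian logarithm at $R$ and $\|\cdot\|_R$ is the norm induced by the Bures–Wasserstein inner product on the tangent space at $R$.
   Context: $\mathbb P_d$ denotes the set of $d\times d$ complex positive definite matrices, $\mathbb H_d$ the Hermitian matrices. For $A,B\in\mathbb P_d$, the geometric mean is $A\#B:=A^{1/2}(A^{-1/2}BA^{-1/2})^{1/2}A^{1/2}$. The generalized fidelity between $P$ and $Q$ at base $R$ is $\operatorname{F}_R(P,Q):=\operatorname{Tr}\big[\sqrt{R^{1/2}PR^{1/2}}\,R^{-1}\sqrt{R^{1/2}QR^{1/2}}\big]$ (a complex number in general), and the squared generalized Bures distance is $\operatorname{B}_R(P,Q):=\operatorname{Tr}[P+Q]-2\,\mathrm{Re}\,\operatorname{F}_R(P,Q)$. For $R\in\mathbb P_d$ and $U\in\mathbb H_d$, $\mathcal L_R(U)$ denotes the unique solution $X$ of the Lyapunov equation $XR+RX=U$, and $\mathcal L_R^{-1}(Z):=ZR+RZ$. The Bures–Wasserstein inner product on $T_R\mathbb P_d\cong\mathbb H_d$ is $\langle U,V\rangle_R:=\operatorname{Tr}[\mathcal L_R(U)\,R\,\mathcal L_R(V)]$, with $\|U\|_R:=\sqrt{\langle U,U\rangle_R}$. The Bures–Wasserstein logarithm map is $\operatorname{Log}_R[P]:=\mathcal L_R^{-1}\big(R^{-1}\#P-\mathbb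 I\big)$. *)

(* Defs.v *)
From HB Require Import structures.
From mathcomp Require Import all_boot all_order all_algebra.
From mathcomp Require Import complex.
From mathcomp Require Import reals.
From Stdlib Require Import ClassicalEpsilon.

Set Implicit Arguments.
Unset Strict Implicit.
Unset Printing Implicit Defensive.

Import Order.TTheory GRing.Theory Num.Theory.
Local Open Scope ring_scope.

Section BW.
Variables (R : realType) (d : nat).
Local Notation C := R[i].
Local Notation M := 'M[C]_d.

Definition adjmx (A : M) : M := map_mx Num.conj (A^T).

Definition hermitian (A : M) : Prop := adjmx A = A.

Definition posdef (A : M) : Prop :=
  hermitian A /\ forall v : 'cV[C]_d, v != 0 ->
    0 < (map_mx Num.conj (v^T) *m A *m v) 0 0.

Definition psd (A : M) : Prop :=
  hermitian A /\ forall v : 'cV[C]_d,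
    0 <= (map_mx Num.conj (v^T) *m A *m v) 0 0.

(* the (unique) positive semidefinite square root of A, when it exists *)
Definition sqrtm (A : M) : M :=
  epsilon (inhabits (0 : M)) (fun S => psd S /\ S *m S = A).

Definition gmean (A B : M) : M :=
  sqrtm A *m sqrtm (invmx (sqrtm A) *m B *m invmx (sqrtm A)) *m sqrtm A.

Definition gfid (Rm P Q : M) : C :=
  \tr (sqrtm (sqrtm Rm *m P *m sqrtm Rm) *m invmx Rm
        *m sqrtm (sqrtm Rm *m Q *m sqrtm Rm)).

Definition gbures (Rm P Q : M) : C :=
  \tr (P + Q) - 2 * 'Re (gfid Rm P Q).

Definition lyap (Rm U : M) : M :=
  epsilon (inhabits (0 : M)) (fun X => X *m Rm + Rm *m X = U).

Definition lyap_inv (Rm Z : M) : M := Z *m Rm + Rm *m Z.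

Definition bw_inner (Rm U V : M) : C := \tr (lyap Rm U *m Rm *m lyap Rm V).
Definition bw_norm (Rm U : M) : C := sqrtC (bw_inner Rm U U).

Definition bw_log (Rm P : M) : M := lyap_inv Rm (gmean (invmx Rm) P - 1%:M).

End BW.

(* Main.v *)
Require Import Defs.
From HB Require Import structures.
From mathcomp Require Import all_boot all_order all_algebra.
From mathcomp Require Import complex ring.
From mathcomp Require Import reals.
From Stdlib Require Import ClassicalEpsilon.
Import Order.TTheory GRing.Theory Num.Theory.
Local Open Scope ring_scope.
Set Implicit Arguments.
Unset Strict Implicit.

Section Aux.
Variables (R : realType) (d : nat).
Local Notation C := R[i].
Local Notation M := 'M[C]_d.

Definition cadj {m n} (A : 'M[C]_(m, n)) : 'M[C]_(n, m) := map_mx Num.conj (A^T).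

Lemma cadj_mul m n p (A : 'M[C]_(m, n)) (B : 'M[C]_(n, p)) :
  cadj (A *m B) = cadj B *m cadj A.
Proof. by rewrite /cadj trmx_mul map_mxM. Qed.

Lemma cadjK m n (A : 'M[C]_(m, n)) : cadj (cadj A) = A.
Proof.
rewrite /cadj map_trmx trmxK -map_mx_comp; apply/matrixP => i j.
by rewrite !mxE /= conjCK.
Qed.

Lemma cadjD m n (A B : 'M[C]_(m, n)) : cadj (A + B) = cadj A + cadj B.
Proof. by apply/matrixP => i j; rewrite !mxE rmorphD. Qed.

Lemma cadjN m n (A : 'M[C]_(m, n)) : cadj (- A) = - cadj A.
Proof. by apply/matrixP => i j; rewrite !mxE rmorphN. Qed.

Lemma cadjB m n (A B : 'M[C]_(m, n)) : cadj (A - B) = cadj A - cadj B.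
Proof. by rewrite cadjD cadjN. Qed.

Lemma cadj1 : cadj (1%:M : M) = 1%:M.
Proof. by rewrite /cadj trmx1 map_mx1. Qed.

Lemma cadj_inv (A : M) : cadj (invmx A) = invmx (cadj A).
Proof. by rewrite /cadj trmx_inv map_invmx. Qed.

Lemma tr_cadj (A : M) : \tr (cadj A) = (\tr A)^*.
Proof. by rewrite /cadj trace_map_mx mxtrace_tr. Qed.

Lemma adjmxE (A : M) : adjmx A = cadj A.
Proof. by []. Qed.

Lemma trace_cadj_ge0 m (X : 'M[C]_(m, d)) : 0 <= \tr (cadj X *m X).
Proof.
rewrite /mxtrace; apply: sumr_ge0 => i _; rewrite mxE.
apply: sumr_ge0 => j _; rewrite !mxE -normCKC; exact: exprn_ge0.
Qed.

Lemma trace_cadj_eq0 m (X : 'M[C]_(m, d)) : \tr (cadj X *m X) = 0 -> X = 0.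
Proof.
rewrite /mxtrace => /eqP; rewrite psumr_eq0; last first.
  move=> i _; rewrite mxE; apply: sumr_ge0 => j _; rewrite !mxE -normCKC.
  exact: exprn_ge0.
move=> /allP H; apply/matrixP => j i; rewrite mxE.
have /implyP := H i (mem_index_enum _); rewrite mxE => /(_ isT).
rewrite psumr_eq0; last by move=> k _; rewrite !mxE -normCKC exprn_ge0.
move=> /allP /(_ j (mem_index_enum _)) /implyP /(_ isT).
by rewrite !mxE -normCKC expf_eq0 /= normr_eq0 => /eqP.
Qed.


Lemma qform_diag (D : 'rV[C]_d) (u : 'cV[C]_d) :
  (cadj u *m diag_mx D *m u) 0 0 = \sum_k D 0 k * ((u k 0)^* * u k 0).
Proof.
rewrite mul_mx_diag mxE; apply: eq_bigr => k _; rewrite !mxE; ring.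
Qed.

Lemma qform_delta (D : 'rV[C]_d) (i : 'I_d) :
  (cadj (delta_mx i 0 : 'cV[C]_d) *m diag_mx D *m (delta_mx i 0 : 'cV[C]_d)) 0 0 = D 0 i.
Proof.
rewrite qform_diag (bigD1 i) //= big1 ?addr0.
  by rewrite !mxE !eqxx /= rmorph1 !mulr1.
by move=> k /negbTE ki; rewrite !mxE ki /= rmorph0 mul0r mulr0.
Qed.

Lemma spectral_herm (A : M) : Defs.hermitian A ->
  exists (P : M) (D : 'rV[C]_d), [/\ P *m cadj P = 1%:M, cadj P *m P = 1%:M &
     A = cadj P *m diag_mx D *m P].
Proof.
move=> hA.
have N : A \is normalmx.
  apply/normalmxP; change (A *m cadj A = cadj A *m A).
  have hA' : cadj A = A := hA. by rewrite hA'.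
have /orthomx_spectralP eA := N.
set P := spectralmx A in eA; set D := spectral_diag A in eA.
have uP : P \is unitarymx by exact: spectral_unitarymx.
have PP : P *m cadj P = 1%:M by apply/unitarymxP.
have iP : invmx P = cadj P by rewrite invmx_unitary.
exists P, D; split => //.
  by rewrite -iP mulVmx // unitarymx_unit.
by rewrite -iP.
Qed.

Lemma psd_cong (A B : M) : psd A -> psd (cadj B *m A *m B).
Proof.
move=> [hA pA]; split.
  have hA' : cadj A = A := hA.
  rewrite /Defs.hermitian adjmxE !cadj_mul cadjK hA'; exact: mulmxA.
move=> v; have := pA (B *m v).
by rewrite -[map_mx _ _]/(cadj _) cadj_mul !mulmxA.
Qed.

Lemma posdef_psd (A : M) : posdef A -> psd A.
Proof.
move=> [hA pA]; split => // v; have [->|nz] := eqVneq v 0.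
  by rewrite mulmx0 mxE.
exact/Order.POrderTheory.ltW/pA.
Qed.

Lemma spectral_psd (A : M) : psd A ->
  exists (P : M) (D : 'rV[C]_d), [/\ P *m cadj P = 1%:M, cadj P *m P = 1%:M,
     A = cadj P *m diag_mx D *m P & forall i, 0 <= D 0 i].
Proof.
move=> [hA pA]; have [P [D [P1 P2 eA]]] := spectral_herm hA.
exists P, D; split => // i.
have := pA (cadj P *m delta_mx i 0).
rewrite -[map_mx _ _]/(cadj _) cadj_mul cadjK eA -!mulmxA !(mulmxA P (cadj P)).
by rewrite P1 !mul1mx mulmxA qform_delta.
Qed.

Lemma posdef_unit (A : M) : posdef A -> A \in unitmx.
Proof.
move=> [hA pA]; have [P [D [P1 P2 eA]]] := spectral_herm hA.
have Dpos i : 0 < D 0 i.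
  have nz : cadj P *m (delta_mx i 0 : 'cV[C]_d) != 0.
    apply/eqP => /(congr1 (mulmx P)); rewrite mulmxA P1 mul1mx mulmx0.
    by move/matrixP => /(_ i 0); rewrite !mxE !eqxx /= => /eqP; rewrite oner_eq0.
  have := pA _ nz.
  rewrite -[map_mx _ _]/(cadj _) cadj_mul cadjK eA -!mulmxA !(mulmxA P (cadj P)).
  by rewrite P1 !mul1mx mulmxA qform_delta.
pose E := \row_j (D 0 j)^-1.
have : A *m (cadj P *m diag_mx E *m P) = 1%:M.
  rewrite eA -!mulmxA (mulmxA P) P1 mul1mx (mulmxA (diag_mx D)) mulmx_diag.
  have -> : \row_j (D 0 j * E 0 j) = const_mx 1.
    by apply/rowP => j; rewrite !mxE divff // gt_eqF.
  have -> : diag_mx (const_mx 1 : 'rV[C]_d) = 1%:M.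
    by apply/matrixP => k l; rewrite !mxE.
  by rewrite mul1mx.
by case/mulmx1_unit.
Qed.

Lemma psd_sqrt_ex (A : M) : psd A -> exists S, psd S /\ S *m S = A.
Proof.
move=> pA; have [P [D [P1 P2 eA D0]]] := spectral_psd pA.
pose E := \row_j sqrtC (D 0 j).
have E0 j : 0 <= E 0 j by rewrite mxE sqrtC_ge0.
exists (cadj P *m diag_mx E *m P); split; last first.
  rewrite -!mulmxA (mulmxA P) P1 mul1mx (mulmxA (diag_mx E)) mulmx_diag eA.
  rewrite !mulmxA; congr (_ *m _ *m _); congr diag_mx.
  by apply/rowP => j; rewrite !mxE -expr2 sqrtCK.
apply: psd_cong; split.
  rewrite /Defs.hermitian adjmxE /cadj tr_diag_mx; apply/matrixP => k l.
  rewrite !mxE; case: eqP => _ //=; last by rewrite !mulr0n rmorph0.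
  by rewrite !mulr1n conj_Creal // sqrtC_real.
move=> v; rewrite -[map_mx _ _]/(cadj _) qform_diag; apply: sumr_ge0 => k _.
by apply: mulr_ge0 => //; rewrite -normCKC exprn_ge0.
Qed.


Lemma psd_herm (A : M) : psd A -> cadj A = A.
Proof. by case. Qed.

Lemma trace_cong (S D : M) : psd S ->
  0 <= \tr (cadj D *m S *m D) /\ (\tr (cadj D *m S *m D) = 0 -> S *m D = 0).
Proof.
move=> pS; have [K [pK KK]] := psd_sqrt_ex pS; have hK := psd_herm pK.
have E : cadj D *m S *m D = cadj (K *m D) *m (K *m D).
  by rewrite cadj_mul hK -KK !mulmxA.
rewrite E; split; first exact: trace_cadj_ge0.
by move=> /trace_cadj_eq0 KD0; rewrite -KK -mulmxA KD0 mulmx0.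
Qed.

Lemma sqrt_unique (S T : M) : psd S -> psd T -> S *m S = T *m T -> S = T.
Proof.
move=> pS pT ST; set D := S - T.
have hD : cadj D = D by rewrite /D cadjB !psd_herm.
have E : S *m D + D *m T = 0.
  by rewrite /D mulmxBr mulmxBl ST addrA subrK subrr.
have tr0 : \tr (cadj D *m S *m D) + \tr (cadj D *m T *m D) = 0.
  rewrite hD [\tr (D *m T *m D)]mxtrace_mulC -mxtraceD -!mulmxA -mulmxDr.
  by rewrite E mulmx0 mxtrace0.
have [g1 z1] := trace_cong D pS; have [g2 z2] := trace_cong D pT.
move/eqP: tr0; rewrite paddr_eq0 // => /andP [/eqP t1 /eqP t2].
have SD := z1 t1; have TD := z2 t2.
have DD : cadj D *m D = 0 by rewrite hD {1}/D mulmxBl SD TD subrr.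
by apply/eqP; rewrite -subr_eq0; apply/eqP/trace_cadj_eq0; rewrite DD mxtrace0.
Qed.

Lemma lyap_uniq (Rm Y : M) : posdef Rm -> Y *m Rm + Rm *m Y = 0 -> Y = 0.
Proof.
move=> pR E; have pR' := posdef_psd pR.
have [g1 z1] := trace_cong (cadj Y) pR'; have [g2 z2] := trace_cong Y pR'.
have tr0 : \tr (cadj (cadj Y) *m Rm *m cadj Y) + \tr (cadj Y *m Rm *m Y) = 0.
  rewrite cadjK mxtrace_mulC mulmxA -mxtraceD -!mulmxA -mulmxDr E mulmx0.
  exact: mxtrace0.
move/eqP: tr0; rewrite paddr_eq0 // => /andP [_ /eqP t2].
have RY := z2 t2.
by rewrite -[Y]mul1mx -(mulVmx (posdef_unit pR)) -mulmxA RY mulmx0.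
Qed.

Lemma sqrtm_spec (A : M) : psd A -> psd (sqrtm A) /\ sqrtm A *m sqrtm A = A.
Proof.
move=> pA.
exact: (epsilon_spec _ (fun S : M => psd S /\ S *m S = A) (psd_sqrt_ex pA)).
Qed.

Lemma sqrtm_eq (A S : M) : psd S -> S *m S = A -> sqrtm A = S.
Proof.
move=> pS SS.
have [p1 p2] : psd (sqrtm A) /\ sqrtm A *m sqrtm A = A.
  by apply: (epsilon_spec _ (fun S : M => psd S /\ S *m S = A)); exists S.
by apply: sqrt_unique => //; rewrite p2 SS.
Qed.

Lemma lyapK (Rm Z : M) : posdef Rm -> lyap Rm (lyap_inv Rm Z) = Z.
Proof.
move=> pR.
have E : lyap Rm (lyap_inv Rm Z) *m Rm + Rm *m lyap Rm (lyap_inv Rm Z)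
          = lyap_inv Rm Z.
  by apply: (epsilon_spec _ (fun X : M => X *m Rm + Rm *m X = lyap_inv Rm Z)); exists Z.
apply/eqP; rewrite -subr_eq0; apply/eqP; apply: (lyap_uniq pR).
by rewrite mulmxBl mulmxBr addrACA E /lyap_inv -opprD subrr.
Qed.

End Aux.

Lemma lyap_invB (R : realType) (d : nat) (Rm X Y : 'M[R[i]]_d) :
  lyap_inv Rm X - lyap_inv Rm Y = lyap_inv Rm (X - Y).
Proof. by rewrite /lyap_inv mulmxBl mulmxBr addrACA opprD. Qed.

Lemma core (R : realType) (d : nat) (Rm r ri UP UQ P Q AP AQ : 'M[R[i]]_d) :
  r \in unitmx -> ri = invmx r -> r *m r = Rm -> cadj r = r ->
  cadj UP = UP -> cadj UQ = UQ ->
  UP *m UP = r *m P *m r -> UQ *m UQ = r *m Q *m r ->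
  AP = ri *m UP *m ri -> AQ = ri *m UQ *m ri ->
  \tr ((AP - AQ) *m Rm *m (AP - AQ))
  = \tr (P + Q) - 2 * 'Re (\tr (UP *m invmx Rm *m UQ)).
Proof.
move=> ur eri rr hr hUP hUQ UPUP UQUQ eAP eAQ.
have rir : ri *m r = 1%:M by rewrite eri (mulVmx ur).
have rri : r *m ri = 1%:M by rewrite eri (mulmxV ur).
have hri : cadj ri = ri by rewrite eri cadj_inv hr.
have riri : ri *m ri = invmx Rm.
  have uR : Rm \in unitmx by rewrite -rr unitmx_mul ur.
  have e : ri *m ri *m Rm = 1%:M.
    by rewrite -rr mulmxA -(mulmxA ri ri r) rir mulmx1 rir.
  by rewrite -[ri *m ri]mulmx1 -(mulmxV uR) mulmxA e mul1mx.
have riR : ri *m Rm *m ri = 1%:M.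
  by rewrite -rr mulmxA rir mul1mx rri.
have hAP : cadj AP = AP by rewrite eAP !cadj_mul hri hUP mulmxA.
have hAQ : cadj AQ = AQ by rewrite eAQ !cadj_mul hri hUQ mulmxA.
have hRm : cadj Rm = Rm by rewrite -rr cadj_mul hr.
have APAP : AP *m Rm *m AP = P.
  rewrite eAP -!mulmxA (mulmxA ri Rm) (mulmxA (ri *m Rm)) riR mul1mx.
  by rewrite (mulmxA UP) UPUP !mulmxA rir mul1mx -mulmxA rri mulmx1.
have AQAQ : AQ *m Rm *m AQ = Q.
  rewrite eAQ -!mulmxA (mulmxA ri Rm) (mulmxA (ri *m Rm)) riR mul1mx.
  by rewrite (mulmxA UQ) UQUQ !mulmxA rir mul1mx -mulmxA rri mulmx1.
have t2 : \tr (AQ *m Rm *m AP) = \tr (UP *m invmx Rm *m UQ).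
  rewrite eAQ eAP.
  rewrite -!mulmxA (mulmxA ri Rm) (mulmxA (ri *m Rm)) riR mul1mx.
  rewrite mxtrace_mulC -!mulmxA riri.
  by rewrite [in RHS]mulmxA [in RHS]mxtrace_mulC.
have t1 : \tr (AP *m Rm *m AQ) = (\tr (UP *m invmx Rm *m UQ))^*.
  by rewrite -t2 -tr_cadj !cadj_mul hAP hAQ hRm mulmxA.
rewrite !mulmxBl ?mulmxBr ?mulmxBl !linearB /= APAP AQAQ t1 t2.
rewrite mxtraceD ReE.
have two : (2 : R[i]) != 0 by rewrite pnatr_eq0.
rewrite mulrC divfK //.
ring.
Qed.

Lemma sqrt_inv (R : realType) (d : nat) (Rm r : 'M[R[i]]_d) :
  psd r -> r *m r = Rm -> Rm \in unitmx ->
  r \in unitmx /\ sqrtm (invmx Rm) = invmx r.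
Proof.
move=> pr rr uR.
have ur : r \in unitmx by move: uR; rewrite -rr unitmx_mul => /andP [? _].
split => //.
have hr := psd_herm pr.
have pri : psd (invmx r).
  have := @psd_cong _ _ _ (invmx r) pr.
  by rewrite cadj_inv hr (mulVmx ur) mul1mx.
apply: sqrtm_eq => //.
have e : invmx r *m invmx r *m Rm = 1%:M.
  by rewrite -rr mulmxA -(mulmxA (invmx r) (invmx r) r) (mulVmx ur) mulmx1 (mulVmx ur).
by rewrite -[_ *m _]mulmx1 -(mulmxV uR) mulmxA e mul1mx.
Qed.

Theorem theorem1 (R : realType) (d : nat) (P Q Rm : 'M[R[i]]_d) :
  posdef P -> posdef Q -> posdef Rm ->
  gbures Rm P Q = bw_norm Rm (bw_log Rm P - bw_log Rm Q) ^+ 2.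
Proof.
move=> hP hQ hR.
have pP := posdef_psd hP; have pQ := posdef_psd hQ; have pR := posdef_psd hR.
have uR := posdef_unit hR.
have [pr rr] := sqrtm_spec pR.
have hr := psd_herm pr.
have [ur sRi] := sqrt_inv pr rr uR.
rewrite /bw_norm sqrtCK /bw_inner /bw_log lyap_invB /gmean sRi invmxK.
rewrite (_ : forall X Y : 'M[R[i]]_d, X - 1%:M - (Y - 1%:M) = X - Y); last first.
  by move=> X Y; rewrite opprB addrA subrK.
rewrite lyapK // /gbures /gfid.
have [pUP UPUP] := sqrtm_spec (@psd_cong _ _ _ (sqrtm Rm) pP).
have [pUQ UQUQ] := sqrtm_spec (@psd_cong _ _ _ (sqrtm Rm) pQ).
rewrite hr in pUP UPUP pUQ UQUQ.
have hUP := psd_herm pUP; have hUQ := psd_herm pUQ.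
symmetry; apply: (core ur erefl rr hr hUP hUQ UPUP UQUQ erefl erefl).
Qed.
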